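(* Let $c>2$ be a constant. For all sufficiently large $n$ and all $p$ with $\frac{c\log n}{n}\le p\le 1$, we have $g_i\le t_1$ for all $2\le i\le\lfloor n/2\rfloor$, where $t_i=\binom{n-1}{i-1}(1-p)^{i(n-i)}$ and $g_i=t_i+t_{n-i}=\binom{n}{i}(1-p)^{i(n-i)}$.
   Context: $\log$ is the natural logarithm. *)

(* Defs.v *)
From Stdlib Require Import Reals.
Open Scope R_scope.

Definition t (n : nat) (p : R) (i : nat) : R :=
  C (n - 1) (i - 1) * (1 - p) ^ (i * (n - i)).

Definition g (n : nat) (p : R) (i : nat) : R := t n p i + t n p (n - i).

(* Main.v *)
Require Import Defs.
From Stdlib Require Import Reals Lra Lia Psatz.
Open Scope R_scope.

Lemma C_n0 n : C n 0 = 1.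
Proof. unfold C. rewrite Nat.sub_0_r. simpl. field. apply INR_fact_neq_0. Qed.

Lemma C_nn n : C n n = 1.
Proof. unfold C. rewrite Nat.sub_diag. simpl. field. apply INR_fact_neq_0. Qed.

Lemma C_le_pow : forall n k, (k <= n)%nat -> C n k <= INR n ^ k.
Proof.
  induction n as [|n IH]; intros k Hk.
  - replace k with 0%nat by lia. rewrite C_n0. simpl. lra.
  - destruct k as [|k]. { rewrite C_n0. simpl. lra. }
    destruct (Nat.eq_dec k n) as [->|Hne].
    + rewrite C_nn. apply pow_R1_Rle. rewrite S_INR. pose proof (pos_INR n). lra.
    + rewrite <- pascal by lia.
      pose proof (IH k ltac:(lia)). pose proof (IH (S k) ltac:(lia)).
      rewrite S_INR. simpl.
      assert (INR n ^ k <= (INR n + 1) ^ k).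
      { apply pow_incr. pose proof (pos_INR n). lra. }
      pose proof (pos_INR n) as Hp0. pose proof (pow_le (INR n) k Hp0).
      simpl in H0. assert ((INR n + 1) * INR n ^ k <= (INR n + 1) * (INR n + 1) ^ k) by (apply Rmult_le_compat_l; lra). nra.
Qed.

Lemma exp_pow_n x m : exp x ^ m = exp (INR m * x).
Proof.
  induction m. simpl. rewrite Rmult_0_l, exp_0. reflexivity.
  rewrite S_INR. simpl. rewrite IHm, <- exp_plus. f_equal. ring.
Qed.

Lemma nat_id i n : (1 <= i)%nat -> (i + 1 <= n)%nat ->
  (i * (n - i) = (n - 1) + (i - 1) * (n - i - 1))%nat.
Proof.
  intros H1 H2. destruct (Nat.le_exists_sub (i+1) n H2) as [k [-> _]].
  destruct i as [|j]; [lia|].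
  replace (k + (S j + 1) - S j)%nat with (S k) by lia.
  replace (k + (S j + 1) - 1)%nat with (k + S j)%nat by lia.
  replace (S j - 1)%nat with j by lia. replace (S k - 1)%nat with k by lia. nia.
Qed.

Theorem lemma20 (c : R) (hc : 2 < c) :
  exists N : nat, forall n : nat, (N <= n)%nat ->
    forall p : R, c * ln (INR n) / INR n <= p -> p <= 1 ->
    forall i : nat, (2 <= i)%nat -> (i <= n / 2)%nat ->
      g n p i <= t n p 1.
Proof.
  destruct (INR_unbounded (4 * c / (c - 2))) as [N0 HN0].
  exists (Nat.max 4 N0). intros n Hn p Hp Hp1 i Hi2 Hin.
  assert (Hn4 : (4 <= n)%nat) by lia.
  assert (H2i : (2 * i <= n)%nat).
  { pose proof (Nat.Div0.mul_div_le n 2). lia. }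
  assert (HnR : INR N0 <= INR n) by (apply le_INR; lia).
  assert (Hn4R : 4 <= INR n) by (replace 4 with (INR 4) by (simpl; lra); apply le_INR; lia).
  set (q := 1 - p).
  set (m := ((i - 1) * (n - i - 1))%nat).
  assert (Hexp : (i * (n - i) = (n - 1) + m)%nat).
  { unfold m. apply nat_id; lia. }
  unfold g, t.
  replace (n - (n - i))%nat with i by lia.
  replace ((n - i) * i)%nat with (i * (n - i))%nat by lia.
  replace (n - i - 1)%nat with (n - 1 - i)%nat by lia.
  rewrite <- (pascal_step1 (n - 1) i) by lia.
  replace (C (n - 1) (i - 1) * (1 - p) ^ (i * (n - i)) + C (n - 1) i * (1 - p) ^ (i * (n - i)))
    with ((C (n - 1) (i - 1) + C (n - 1) (S (i - 1))) * (1 - p) ^ (i * (n - i)))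
    by (replace (S (i - 1)) with i by lia; ring).
  rewrite pascal by lia.
  replace (S (n - 1)) with n by lia. replace (S (i - 1)) with i by lia.
  replace (1 - 1)%nat with 0%nat by lia. rewrite C_n0, Nat.mul_1_l, Rmult_1_l.
  rewrite Hexp, pow_add. fold q.
  assert (Hq0 : 0 <= q) by (unfold q; lra).
  assert (Hqn : 0 <= q ^ (n - 1)) by (apply pow_le; lra).
  cut (C n i * q ^ m <= 1).
  { intro H. nra. }
  assert (HnposR : 0 < INR n) by lra.
  assert (Hln : 0 <= ln (INR n)).
  { rewrite <- ln_1. left. apply ln_increasing; lra. }
  set (a := c * ln (INR n) / INR n).
  assert (Hqa : q <= exp (- a)) by (pose proof (exp_ineq1_le (-a)); unfold q, a in *; lra).
  assert (Hqm : q ^ m <= exp (INR m * - a)).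
  { rewrite <- exp_pow_n. apply pow_incr. lra. }
  assert (HC : C n i <= exp (INR i * ln (INR n))).
  { rewrite <- exp_pow_n, exp_ln by lra. apply C_le_pow. lia. }
  assert (HCpos : 0 <= C n i).
  { unfold C. apply Rle_mult_inv_pos. apply pos_INR.
    apply Rmult_lt_0_compat; apply INR_fact_lt_0. }
  assert (Hpoly : INR i * INR n <= c * INR m).
  { unfold m. rewrite mult_INR.
    rewrite !minus_INR by lia. simpl.
    assert (Hi2R : 2 <= INR i) by (replace 2 with (INR 2) by (simpl; lra); apply le_INR; lia).
    assert (H2iR : 2 * INR i <= INR n) by (replace 2 with (INR 2) by (simpl; lra); rewrite <- mult_INR; apply le_INR; lia).
    assert (Hc2 : 4 * c <= (c - 2) * INR n).
    { assert (4 * c / (c - 2) < INR n) by lra.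
      apply (Rmult_lt_compat_r (c - 2)) in H; [|lra].
      unfold Rdiv in H. rewrite Rmult_assoc, Rinv_l in H by lra. lra. }
    assert (P1 : 0 <= c * ((INR i - 2) * (INR n - 2 * INR i))).
    { apply Rmult_le_pos; [lra|]. apply Rmult_le_pos; lra. }
    assert (P2 : 0 <= INR i * ((c - 2) * INR n - 4 * c)).
    { apply Rmult_le_pos; lra. }
    nra. }
  assert (Hkey : INR i * ln (INR n) + INR m * - a <= 0).
  { unfold a. unfold Rdiv.
    assert (INR i * ln (INR n) * INR n <= c * INR m * ln (INR n)) by nra.
    apply (Rmult_le_reg_r (INR n)); [lra|].
    field_simplify; [|lra]. nra. }
  assert (Hexpm : 0 <= exp (INR m * - a)) by (left; apply exp_pos).
  apply Rle_trans with (exp (INR i * ln (INR n)) * exp (INR m * - a)).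
  { apply Rmult_le_compat; auto. apply pow_le; lra. }
  rewrite <- exp_plus. rewrite <- exp_0. destruct Hkey as [Hk|Hk].
  left. apply exp_increasing. exact Hk. rewrite Hk. lra.
Qed.
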